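(* Let $n\in\mathbb N$ and $c\in(0,1)$. Then, as $x\to+\infty$, $\mathbb P^T_n(x)=o(\log x)$ and $\mathbb P^T_n(x)=\omega(\log^c x)$ (i.e. $\mathbb P^T_n(x)/\log^c x\to+\infty$). In particular $\log\mathbb P^T_n(x)\sim\log\log x$.
   Context: Let $p_n$ denote the $n$-th prime number. Define $p^{(0)}_n=n$ and recursively $p^{(k+1)}_n=p_{p^{(k)}_n}$ for $k\in\mathbb N_0$. Let $\mathbb P^T_n=\{p^{(k)}_n:k\in\mathbb N\}$ and $\mathbb P^T_n(x)=\#\{a\le x: a\in\mathbb P^T_n\}$. $\log$ is the natural logarithm, $\log^c x=(\log x)^c$. *)

(* Defs.v *)
From HB Require Import structures.
From mathcomp Require Import all_boot all_order all_algebra.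
From mathcomp Require Import all_classical all_reals all_analysis.
Set Implicit Arguments. Unset Strict Implicit. Unset Printing Implicit Defensive.
Import Order.TTheory GRing.Theory Num.Theory.

Lemma exists_prime_gt (m : nat) : exists p, (m < p) && prime p.
Proof. by case: (prime_above m) => p H1 H2; exists p; rewrite H1 H2. Qed.

Definition next_prime (m : nat) : nat := ex_minn (exists_prime_gt m).

(* nth_prime n = p_n, the n-th prime with 1-based indexing: p_1 = 2, p_2 = 3, ...
   (nth_prime 0 = 1 is a dummy value, never used for n >= 1). *)
Definition nth_prime (n : nat) : nat := iter n next_prime 1.

Definition iter_prime (k n : nat) : nat := iter k nth_prime n.

Definition inPT (n a : nat) : Prop := exists k, (1 <= k)%N /\ a = iter_prime k n.

(* P^T_n(x) = #{ a <= x : a in P^T_n }, for real x (natural a <= x iff a <= truncn x, x >= 0). *)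
Definition PT (R : realType) (n : nat) (x : R) : nat :=
  (\sum_(0 <= a < (Num.truncn x).+1 | `[< inPT n a >]) 1)%N.

(* Main.v *)
Require Import Defs.
From HB Require Import structures.
From mathcomp Require Import all_boot all_order all_algebra.
From mathcomp Require Import all_classical all_reals all_analysis.
From mathcomp Require Import zify ring lra.
Set Implicit Arguments. Unset Strict Implicit. Unset Printing Implicit Defensive.


Definition pic (y : nat) : nat := \sum_(0 <= p < y.+1 | prime p) 1.

Lemma next_primeP q : q < next_prime q /\ prime (next_prime q) /\
   forall p, q < p -> prime p -> next_prime q <= p.
Proof.
rewrite /next_prime; case: ex_minnP => m /andP[H1 H2] Hmin.
split=> //; split=> // p Hp Pp; apply: Hmin; by rewrite Hp Pp.
Qed.

Lemma nth_primeS m : nth_prime m.+1 = next_prime (nth_prime m).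
Proof. by rewrite /nth_prime iterS. Qed.

Lemma nth_prime_prime m : 0 < m -> prime (nth_prime m).
Proof. case: m => // m _; rewrite nth_primeS; by case: (next_primeP (nth_prime m)) => _ []. Qed.

Lemma nth_prime_lt m : m < nth_prime m.
Proof.
elim: m => [|m IH]; first by [].
rewrite nth_primeS; case: (next_primeP (nth_prime m)) => H _; lia.
Qed.

Lemma pic_S y : pic y.+1 = pic y + prime y.+1.
Proof. rewrite /pic big_mkcond big_nat_recr //= -big_mkcond; by case: (prime y.+1); rewrite ?addn0 ?addn1. Qed.

Lemma pic_mono y z : y <= z -> pic y <= pic z.
Proof.
move=> /subnK <-; elim: (z - y) => [|k IH]; first by rewrite add0n.
rewrite addSn pic_S; lia.
Qed.

Lemma pic_le y : pic y <= y.
Proof. elim: y => [|y IH]; first by rewrite /pic big_mkcond big_nat1. rewrite pic_S; case: (prime y.+1) => /=; lia. Qed.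

Lemma pic_gap q r : q <= r -> (forall p, q < p <= r -> ~~ prime p) -> pic r = pic q.
Proof.
move=> /subnK <-; elim: (r - q) => [|k IH] H; first by rewrite add0n.
rewrite addSn pic_S IH; last by move=> p /andP[h1 h2]; apply: H; lia.
have := H (k + q).+1; rewrite leqnn ltnS leq_addl => /(_ isT) /negbTE ->; by rewrite addn0.
Qed.

Lemma pic_nth m : pic (nth_prime m) = m.
Proof.
elim: m => [|m IH]; first by rewrite /nth_prime /= /pic big_mkcond big_nat_recr //= big_nat1.
rewrite nth_primeS; move: (next_primeP (nth_prime m)) IH.
set q := nth_prime m; clearbody q => -[H1 [H2 H3]] IH.
have h0 : 0 < next_prime q by lia.
rewrite -(prednK h0) pic_S (prednK h0) H2 (@pic_gap q) ?IH ?addn1 //; first (rewrite -ltnS (prednK h0); exact H1).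
move=> p /andP[h1 h2]; apply/negP => Pp; have := H3 p h1 Pp. lia.
Qed.

Lemma nth_prime_le m y : 0 < m -> (nth_prime m <= y) = (m <= pic y).
Proof.
move=> m0; apply/idP/idP => H.
  by rewrite -{1}(pic_nth m); apply: pic_mono.
apply/negP => /negP; rewrite -ltnNge => Hy.
have P := nth_prime_prime m0.
have : pic (nth_prime m) = pic (nth_prime m).-1 + 1.
  have h0 : 0 < nth_prime m by case: (nth_prime m) P.
  by rewrite -{1}(prednK h0) pic_S (prednK h0) P.
rewrite pic_nth => E.
have := pic_mono (_ : y <= (nth_prime m).-1); lia.
Qed.

Lemma count_restrict (P : pred nat) y N : (forall p, P p -> p <= y) -> y <= N ->
  \sum_(0 <= p < N.+1 | P p) 1 = \sum_(0 <= p < y.+1 | P p) 1.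
Proof.
move=> H yN; rewrite (@big_cat_nat _ _ _ y.+1) //=.
rewrite -[RHS]addn0; congr (_ + _).
rewrite big_nat_cond big1 // => p /andP[/andP[h1 _] Pp].
have := H p Pp; lia.
Qed.

Lemma count_any (P : pred nat) a b : (forall p, P p -> p <= a) -> (forall p, P p -> p <= b) ->
  \sum_(0 <= p < a.+1 | P p) 1 = \sum_(0 <= p < b.+1 | P p) 1.
Proof.
move=> Ha Hb; rewrite -(@count_restrict P a (maxn a b)) ?leq_maxl //.
by rewrite -(@count_restrict P b (maxn a b)) ?leq_maxr.
Qed.

Lemma prod_const_pow (r : seq nat) (P : pred nat) a :
  \prod_(i <- r | P i) a = a ^ (\sum_(i <- r | P i) 1).
Proof.
elim: r => [|x r IH]; first by rewrite !big_nil.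
rewrite !big_cons; case: (P x) => //; rewrite IH -expnS; congr (_ ^ _); lia.
Qed.

Lemma bin_ge2 m : 2 ^ m <= 'C(m.*2, m).
Proof.
elim: m => [|m IH]; first by [].
have E : 'C((m.+1).*2, m.+1) = 'C(m.*2.+1, m.+1) + 'C(m.*2.+1, m).
  by rewrite doubleS binS.
have E2 : 'C(m.*2.+1, m) = 'C(m.*2.+1, m.+1).
  rewrite -bin_sub; last by lia.
  congr 'C(_, _); lia.
have E3 : 'C(m.*2, m) <= 'C(m.*2.+1, m.+1) by rewrite binS leq_addl.
rewrite E E2 expnS; lia.
Qed.

Lemma bin_le4 m : 'C(m.*2, m) <= 4 ^ m.
Proof.
have -> : 4 ^ m = (1 + 1) ^ (m.*2) by rewrite -mul2n expnM.
rewrite expnDn.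
have hm : m < (m.*2).+1 by lia.
rewrite (bigD1 (Ordinal hm)) //= !exp1n !muln1; exact: leq_addr.
Qed.

Lemma logn_binE p m : 0 < m ->
  logn p 'C(m.*2, m) + 2 * logn p m`! = logn p (m.*2)`!.
Proof.
move=> m0; have Hm : m <= m.*2 by lia.
rewrite -(bin_fact Hm) lognM ?bin_gt0 ?muln_gt0 ?fact_gt0 //.
rewrite lognM ?fact_gt0 //.
have -> : m.*2 - m = m by lia.
lia.
Qed.

Lemma div_double m q : 0 < q -> m.*2 %/ q <= (m %/ q).*2 + (q <= m.*2).
Proof.
move=> q0; case: (leqP q m.*2) => h /=.
  rewrite -ltnS ltn_divLR //.
  have := ltn_ceil m q0; rewrite mulSn; nia.
by rewrite divn_small.
Qed.

Lemma logn_fact_ext p m N : prime p -> m <= N ->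
  logn p m`! = \sum_(1 <= k < N.+1) m %/ p ^ k.
Proof.
move=> Pp mN; rewrite logn_fact //.
rewrite (@big_cat_nat _ _ _ m.+1 1 N.+1) //=.
rewrite -[LHS]addn0; congr (_ + _); symmetry.
rewrite big_nat_cond big1 // => k /andP[/andP[h1 _] _].
apply: divn_small; have := ltn_expl k (prime_gt1 Pp); lia.
Qed.

Lemma logn_bin_le p m : prime p -> 0 < m ->
  logn p 'C(m.*2, m) <= \sum_(1 <= k < (m.*2).+1) (p ^ k <= m.*2).
Proof.
move=> Pp m0; have E := logn_binE p m0.
have H1 := @logn_fact_ext p m (m.*2) Pp ltac:(lia).
have H2 := @logn_fact_ext p (m.*2) (m.*2) Pp (leqnn _).
have H3 : \sum_(1 <= k < (m.*2).+1) m.*2 %/ p ^ k <=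
          \sum_(1 <= k < (m.*2).+1) ((m %/ p ^ k).*2 + (p ^ k <= m.*2)).
  apply: leq_sum => k _; apply: div_double; by rewrite expn_gt0 prime_gt0.
rewrite big_split /= in H3.
have H4 : \sum_(1 <= k < (m.*2).+1) (m %/ p ^ k).*2 = 2 * \sum_(1 <= k < (m.*2).+1) (m %/ p ^ k).
  rewrite big_distrr /=; apply: eq_bigr => k _; by rewrite mul2n.
lia.
Qed.

Lemma sum_le_min N T : \sum_(1 <= k < N.+1) (k <= T) = minn N T.
Proof.
elim: N => [|N IH]; first by rewrite big_geq // min0n.
rewrite big_nat_recr //= IH; case: (leqP N.+1 T) => h /=; lia.
Qed.

Lemma pfactor_bin_le p m : prime p -> 0 < m ->
  p ^ logn p 'C(m.*2, m) <= (if p <= m.*2 then m.*2 else 1).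
Proof.
move=> Pp m0; have p1 := prime_gt1 Pp.
set T := trunc_log p m.*2.
have HT : logn p 'C(m.*2, m) <= T.
  apply: leq_trans (logn_bin_le Pp m0) _.
  apply: (@leq_trans (\sum_(1 <= k < (m.*2).+1) (k <= T))); last first.
    rewrite sum_le_min; exact: geq_minr.
  apply: leq_sum => k _; case h: (p ^ k <= m.*2) => //=.
  by rewrite (trunc_log_max p1 h).
apply: leq_trans (leq_pexp2l (ltnW p1) HT) _.
case: ifP => h.
  apply: trunc_logP => //; lia.
have -> : T = 0.
  apply/eqP; rewrite trunc_log_eq0; apply/orP; right; lia.
by [].
Qed.

Lemma count_mono (P : pred nat) a b : a <= b ->
  \sum_(0 <= p < a.+1 | P p) 1 <= \sum_(0 <= p < b.+1 | P p) 1.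
Proof.
move=> ab; rewrite [X in _ <= X](@big_cat_nat _ _ _ a.+1) //=.
exact: leq_addr.
Qed.

Lemma cheb_lower m : 0 < m -> 2 ^ m <= (m.*2) ^ pic (m.*2).
Proof.
move=> m0.
have C0 : 0 < 'C(m.*2, m) by rewrite bin_gt0; lia.
apply: leq_trans (bin_ge2 m) _.
rewrite -{1}(partnT C0) /partn.
apply: (@leq_trans (\prod_(0 <= p < ('C(m.*2, m)).+1 | p \in predT)
                       (if prime p && (p <= m.*2) then m.*2 else 1))).
  apply: leq_prod => p _; case Pp: (prime p) => /=.
    exact: pfactor_bin_le.
  by rewrite lognE Pp.
rewrite -big_mkcondr prod_const_pow; apply: leq_pexp2l; first lia.
apply: (@leq_trans (\sum_(0 <= p < (maxn 'C(m.*2, m) m.*2).+1 | (p \in predT) && (prime p && (p <= m.*2))) 1)).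
  apply: count_mono; exact: leq_maxl.
rewrite (@count_restrict _ (m.*2)); last exact: leq_maxr.
  rewrite /pic big_nat_cond [X in _ <= X]big_nat_cond.
  apply: eq_leq; apply: eq_bigl => p; rewrite ltnS.
  by case: (p <= m.*2); rewrite /= ?andbT ?andbF.
by move=> p /and3P[_ _ ->].
Qed.

Definition cnt m := \sum_(0 <= p < (m.*2).+1 | prime p && (m < p) && (p <= m.*2)) 1.

Lemma pic_split m : pic (m.*2) = pic m + cnt m.
Proof.
rewrite /pic (bigID (fun p => m < p)) /= addnC; congr (_ + _).
  rewrite (@count_restrict _ m); last by lia.
    rewrite big_nat_cond [RHS]big_nat_cond; apply: eq_bigl => p.
    rewrite ltnS -leqNgt; by case: (p <= m); rewrite /= ?andbT ?andbF.
  by move=> p /andP[_]; rewrite -leqNgt.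
rewrite /cnt big_nat_cond [RHS]big_nat_cond; apply: eq_bigl => p.
rewrite ltnS; by case: (p <= m.*2); rewrite /= ?andbT ?andbF.
Qed.

Lemma cheb_upper m : 0 < m -> m.+1 ^ cnt m <= 4 ^ m.
Proof.
move=> m0.
have C0 : 0 < 'C(m.*2, m) by rewrite bin_gt0; lia.
pose pi := [pred p | prime p && (m < p) && (p <= m.*2)].
have Hl : forall p, p \in pi -> 0 < logn p 'C(m.*2, m).
  move=> p; rewrite inE => /andP[/andP[Pp h1] h2].
  have E := logn_binE p m0.
  have E1 : logn p m`! = 0.
    rewrite logn_fact // big_nat_cond big1 // => k /andP[/andP[k1 _] _].
    apply: divn_small; apply: (leq_trans h1).
    by rewrite -{1}(expn1 p) leq_pexp2l // prime_gt0.
  have E2 : 0 < logn p (m.*2)`!.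
    rewrite logn_fact // big_ltn; last by lia.
    rewrite expn1; have : 0 < m.*2 %/ p by rewrite divn_gt0 // prime_gt0.
    lia.
  lia.
apply: leq_trans (bin_le4 m).
apply: (leq_trans _ (dvdn_leq C0 (dvdn_part pi _))).
rewrite /partn.
apply: (@leq_trans (\prod_(0 <= p < ('C(m.*2, m)).+1 | p \in pi) m.+1)); last first.
  apply: leq_prod => p Hp; have L := Hl p Hp.
  move: Hp; rewrite inE => /andP[/andP[Pp h1] h2].
  apply: (leq_trans h1); rewrite -{1}(expn1 p); apply: leq_pexp2l => //; exact: prime_gt0.
rewrite prod_const_pow; apply: eq_leq; congr (_ ^ _).
rewrite /cnt (@count_any _ (m.*2) ('C(m.*2, m))) //.
  by move=> p /andP[_ ->].
move=> p Hp; have L := Hl p Hp; apply: dvdn_leq => //.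
move: L; rewrite logn_gt0 mem_primes => /and3P[]//.
Qed.

Lemma cnt_pow j : j * cnt (2 ^ j) <= 2 ^ j.+1.
Proof.
case: (posnP (cnt (2 ^ j))) => [->|c0]; first by rewrite muln0.
have H := cheb_upper (expn_gt0 2 j).
have H2 : (2 ^ j) ^ cnt (2 ^ j) <= (2 ^ j).+1 ^ cnt (2 ^ j) by rewrite leq_exp2r.
have E : 4 ^ 2 ^ j = 2 ^ (2 ^ j.+1) by rewrite expnS expnM.
rewrite -expnM in H2; have := leq_trans H2 H; rewrite E leq_exp2l //.
Qed.

Lemma pic_pow_bound J0 i : 0 < J0 ->
  J0 * pic (2 ^ (J0 + i)) <= J0 * 2 ^ J0 + 2 ^ (J0 + i).+1.
Proof.
move=> J00; elim: i => [|i IH].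
  rewrite addn0; have := pic_le (2 ^ J0); nia.
have E : 2 ^ (J0 + i.+1) = (2 ^ (J0 + i)).*2 by rewrite addnS expnS mul2n.
rewrite E pic_split.
have := cnt_pow (J0 + i).
have E2 : 2 ^ (J0 + i.+1).+1 = 2 * 2 ^ (J0 + i).+1 by rewrite addnS expnS.
rewrite E2.
have : J0 * cnt (2 ^ (J0 + i)) <= (J0 + i) * cnt (2 ^ (J0 + i)) by apply: leq_mul; lia.
nia.
Qed.

Lemma pic_density M : 0 < M -> exists y0, forall y, y0 <= y -> M * pic y <= y.
Proof.
move=> M0; set J0 := 8 * M.
have J00 : 0 < J0 by lia.
exists (J0 * 2 ^ J0) => y Hy.
have Hy' : 2 ^ J0 <= y by apply: leq_trans Hy; apply: leq_pmull.
set J := trunc_log 2 y.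
have HJ : J0 <= J by apply: trunc_log_max.
have y0 : 0 < y by apply: leq_trans Hy'; exact: expn_gt0.
have H1 : 2 ^ J <= y by apply: trunc_logP.
have H2 : y < 2 ^ J.+1 by apply: trunc_log_ltn.
have H3 : pic y <= pic (2 ^ J.+1) by apply: pic_mono; lia.
have := pic_pow_bound (J.+1 - J0) J00; rewrite subnKC; last by lia.
rewrite !expnS in H2 H3 *.
have H4 : M * pic y <= M * pic (2 * 2 ^ J) by apply: leq_mul.
rewrite /J0 -mulnA; move: Hy; rewrite /J0 -/J0; clearbody J0 J => Hy.
nia.
Qed.

Lemma nth_prime_big M : 0 < M -> exists m0, forall m, m0 <= m -> M * m <= nth_prime m.
Proof.
move=> M0; case: (pic_density M0) => y0 H; exists y0 => m Hm.
have := H (nth_prime m); rewrite pic_nth; apply.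
have := nth_prime_lt m; lia.
Qed.

Lemma pic_pow s : 0 < s -> 2 ^ s.-1 <= s * pic (2 ^ s).
Proof.
move=> s0; have := cheb_lower (expn_gt0 2 s.-1).
have E : (2 ^ s.-1).*2 = 2 ^ s by rewrite -mul2n -expnS prednK.
rewrite E -expnM leq_exp2l //.
Qed.

Lemma step_bound D e a : 0 < D -> e + D <= 2 ^ D.-1 -> 0 < a -> a <= 2 ^ e ->
  nth_prime a <= 2 ^ (e + D).
Proof.
move=> D0 H a0 ha; rewrite nth_prime_le //.
have s0 : 0 < e + D by lia.
have := pic_pow s0.
have E : 2 ^ (e + D).-1 = 2 ^ e * 2 ^ D.-1 by rewrite -expnD; congr (_ ^ _); lia.
rewrite E => H2.
have H3 : (e + D) * a <= 2 ^ e * 2 ^ D.-1.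
  rewrite mulnC; apply: leq_mul => //.
have := leq_trans H3 H2; rewrite leq_pmul2l //.
Qed.

Definition PTn n N := \sum_(0 <= a < N.+1 | `[< inPT n a >]) 1.

Lemma iter_primeS k n : iter_prime k.+1 n = nth_prime (iter_prime k n).
Proof. by rewrite /iter_prime iterS. Qed.

Lemma iter_prime_ge k n : n + k <= iter_prime k n.
Proof.
elim: k => [|k IH]; first by rewrite addn0.
rewrite iter_primeS; have := nth_prime_lt (iter_prime k n); lia.
Qed.

Lemma iter_prime_mono n j k : j < k -> iter_prime j n < iter_prime k n.
Proof.
move=> /subnK <-; elim: (k - j.+1) => [|i IH].
  rewrite add0n iter_primeS; exact: nth_prime_lt.
rewrite addSn iter_primeS; have := nth_prime_lt (iter_prime (i + j.+1) n); lia.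
Qed.

Lemma iter_prime_le n j k : j <= k -> iter_prime j n <= iter_prime k n.
Proof.
rewrite leq_eqVlt => /orP[/eqP -> //|h]; exact: ltnW (iter_prime_mono n h).
Qed.

Lemma iter_prime_inj n : injective (fun k => iter_prime k n).
Proof.
move=> i j /= E; case: (ltngtP i j) => // h; have := iter_prime_mono n h; lia.
Qed.

Lemma PTnE n N : PTn n N = size (seq.filter (fun a => `[< inPT n a >]) (iota 0 N.+1)).
Proof. by rewrite /PTn sum1_count size_filter. Qed.

Lemma PT_lower n N K : iter_prime K n <= N -> K <= PTn n N.
Proof.
move=> HK; rewrite PTnE.
have -> : K = size (map (fun k => iter_prime k n) (iota 1 K)) by rewrite size_map size_iota.
apply: uniq_leq_size.
  rewrite map_inj_uniq ?iota_uniq //; exact: iter_prime_inj.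
move=> x /mapP[k]; rewrite mem_iota => /andP[k1 k2] ->.
rewrite mem_filter mem_iota /=; apply/andP; split.
  apply/asboolP; exists k; split => //.
have := iter_prime_le n (_ : k <= K); lia.
Qed.

Lemma PT_upper n N K : N < iter_prime K.+1 n -> PTn n N <= K.
Proof.
move=> HK; rewrite PTnE.
apply: (@leq_trans (size (map (fun k => iter_prime k n) (iota 1 K)))); last first.
  by rewrite size_map size_iota.
apply: uniq_leq_size.
  apply: seq.filter_uniq; exact: iota_uniq.
move=> x; rewrite mem_filter mem_iota => /andP[/asboolP [k [k1 ->]] h].
apply/mapP; exists k => //; rewrite mem_iota.
case: (leqP k K) => hk; first lia.
have := iter_prime_le n hk; lia.
Qed.

Lemma PT_up_bound n r : 0 < r -> 0 < n ->
  exists m0, forall N, 0 < N -> PTn n N <= m0 + trunc_log 2 N %/ r.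
Proof.
move=> r0 n0; case: (nth_prime_big (expn_gt0 2 r)) => m0 Hm0.
exists m0 => N N0.
have Hj : forall j, 2 ^ (r * j) <= iter_prime (m0 + j) n.
  elim=> [|j IH].
    rewrite muln0 addn0; have := iter_prime_ge m0 n; lia.
  rewrite addnS iter_primeS.
  have h1 := iter_prime_ge (m0 + j) n.
  have := Hm0 (iter_prime (m0 + j) n) ltac:(lia).
  rewrite mulnS expnD; nia.
set S := trunc_log 2 N.
apply: PT_upper; rewrite -addnS.
apply: (leq_trans _ (Hj _)).
have h1 : N < 2 ^ S.+1 by apply: trunc_log_ltn.
apply: (leq_trans h1); rewrite leq_exp2l //.
have := ltn_ceil S r0; rewrite mulnC; lia.
Qed.

Lemma PT_low_bound n S N : 0 < n -> 2 ^ S <= N -> n <= S ->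
  (S - n) %/ (trunc_log 2 S).+2 <= PTn n N.
Proof.
move=> n0 HS nS; set D := (trunc_log 2 S).+2; set K := (S - n) %/ D.
have KD : K * D <= S - n by apply: leq_trunc_div.
have SD : S < 2 ^ D.-1 by apply: trunc_log_ltn.
have Hk : forall k, k <= K -> iter_prime k n <= 2 ^ (n + k * D).
  elim=> [|k IH] hk.
    rewrite mul0n addn0 /iter_prime /=; exact: ltnW (ltn_expl n (isT : 1 < 2)).
  have -> : n + k.+1 * D = (n + k * D) + D by rewrite mulSn; nia.
  rewrite iter_primeS.
  apply: step_bound => //.
  - have : k.+1 * D <= K * D by apply: leq_mul; lia.
    rewrite mulSn; lia.
  - have := iter_prime_ge k n; lia.
  - apply: IH; lia.
apply: PT_lower; apply: leq_trans (Hk K (leqnn _)) _.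
apply: leq_trans HS; rewrite leq_exp2l //; lia.
Qed.

Import Order.TTheory GRing.Theory Num.Theory numFieldNormedType.Exports.
Local Open Scope ring_scope.


Lemma PT_PTn {R : realType} n (x : R) : PT n x = PTn n (Num.truncn x).
Proof. by []. Qed.

Lemma ln2_gt0 {R : realType} : 0 < ln (2 : R).
Proof. apply: ln_gt0; lra. Qed.

Lemma ln2_le1 {R : realType} : ln (2 : R) <= 1.
Proof. have := @le_ln1Dx R 1 ltac:(lra); by rewrite (_ : 1 + 1 = 2). Qed.

Lemma ln_natpow {R : realType} (S : nat) : ln ((2 ^ S)%:R : R) = S%:R * ln 2.
Proof. by rewrite natrX lnXn // mulr_natl. Qed.

Lemma trunc_facts {R : realType} (x : R) : 1 <= x ->
  let N := Num.truncn x in let S := trunc_log 2 N in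
  (0 < N)%N /\ (2 ^ S <= N)%N /\ S%:R * ln 2 <= ln x /\ ln x <= (S.+1)%:R * ln 2.
Proof.
move=> x1 N S.
have N0 : (0 < N)%N by rewrite truncn_gt0.
have H1 : (2 ^ S <= N)%N by apply: trunc_logP.
have H2 : (N < 2 ^ S.+1)%N by apply: trunc_log_ltn.
have Hx := truncn_itv (ltW (lt_le_trans ltr01 x1)); rewrite -/N in Hx.
case/andP: Hx => Hx1 Hx2.
split => //; split => //; split.
  rewrite -ln_natpow ler_ln ?posrE ?ltr0n ?expn_gt0 //; last exact: (lt_le_trans ltr01 x1).
  apply: le_trans Hx1; by rewrite ler_nat.
rewrite -ln_natpow ler_ln ?posrE ?ltr0n ?expn_gt0 //; last exact: (lt_le_trans ltr01 x1).
apply: (le_trans (ltW Hx2)); by rewrite ler_nat.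
Qed.

Lemma part1 {R : realType} n (n0 : (0 < n)%N) (e : R) : 0 < e ->
  exists X : R, forall x, X < x -> (PT n x)%:R <= e * ln x.
Proof.
move=> e0; set l2 := ln (2 : R); have l20 : 0 < l2 := ln2_gt0.
set r := (Num.truncn (2 / (e * l2))).+1.
have hr : 2 / (e * l2) < r%:R by apply: truncnS_gt.
have hr' : 2 < r%:R * (e * l2).
  by move: hr; rewrite ltr_pdivrMr ?mulr_gt0.
have r0 : (0 < r)%N by [].
case: (PT_up_bound r0 n0) => m0 Hm0.
exists (Num.max 1 (expR (2 * m0%:R / e))) => x.
rewrite gt_max => /andP[x1 xe].
have [N0 [HS [HL _]]] := trunc_facts (ltW x1).
move: N0 HS HL; set N := Num.truncn x; set S := trunc_log 2 N => N0 HS HL.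
have x0 : 0 < x by apply: lt_trans x1.
have Lm : 2 * m0%:R / e < ln x.
  by rewrite -ltr_expR lnK ?posrE.
have Lm' : 2 * m0%:R < e * ln x.
  by move: Lm; rewrite ltr_pdivrMr // [ln x * e]mulrC.
have H1 : ((PT n x)%:R : R) <= m0%:R + (S %/ r)%:R.
  by rewrite PT_PTn -natrD ler_nat; apply: Hm0.
have H2 : ((S %/ r)%:R : R) * r%:R <= S%:R.
  by rewrite -natrM ler_nat; apply: leq_trunc_div.
set Sr := ((S %/ r)%:R : R) in H1 H2.
have Sr0 : 0 <= Sr by [].
have H3 : 2 * Sr <= Sr * (r%:R * (e * l2)).
  rewrite [2 * Sr]mulrC; apply: ler_wpM2l => //; exact: ltW.
have H4 : Sr * (r%:R * (e * l2)) <= S%:R * (e * l2).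
  by rewrite mulrA ler_pM2r // mulr_gt0.
have H5 : S%:R * (e * l2) <= e * ln x.
  by rewrite mulrCA ler_pM2l // mulrC.
lra.
Qed.

Lemma bernoulli {R : realType} (d : R) T : 0 <= d -> 1 + T%:R * d <= (1 + d) ^+ T.
Proof.
move=> d0; elim: T => [|T IH]; first by rewrite expr0 mul0r addr0.
rewrite exprS -natr1.
have h1 : 0 <= T%:R * d by apply: mulr_ge0.
have h2 : (1 + T%:R * d) * (1 + d) <= (1 + d) * (1 + d) ^+ T.
  rewrite mulrC; apply: ler_wpM2l => //; lra.
have h3 : 0 <= T%:R * d * d by apply: mulr_ge0.
nra.
Qed.

Lemma powR_natpow2 {R : realType} (c : R) k : ((2 ^ k)%:R : R) `^ c = (2 `^ c) ^+ k.
Proof.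
rewrite natrX -powR_mulrn; last lra.
by rewrite powRAC powR_mulrn // powR_ge0.
Qed.

Lemma part2 {R : realType} n (n0 : (0 < n)%N) (c : R) : 0 < c -> c < 1 -> forall A : R, 0 <= A ->
  exists X : R, forall x, X < x -> A * (ln x) `^ c <= (PT n x)%:R.
Proof.
move=> c0 c1 A A0.
set w := (2 : R) `^ c; set h := (2 : R) `^ ((1 - c) / 2).
have w1 : 1 <= w.
  have := @ler_powR R 2 ltac:(lra) 0 c (ltW c0); by rewrite powRr0.
have w2 : w <= 2 by apply: ler1_powR; lra.
have h1 : 1 < h.
  have : 0 < ln h by rewrite /h ln_powR mulr_gt0 ?ln2_gt0 //; lra.
  apply: contraLR; rewrite -!leNgt => h1; exact: ln_le0.
have hw : h ^+ 2 * w = 2.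
  rewrite -powR_mulrn; last exact: powR_ge0.
  rewrite -powRrM /w -powRD; last (apply/implyP => _; lra).
  rewrite (_ : (1 - c) / 2 * 2%:R + c = 1); last by field.
  by rewrite powRr1 //; lra.
set d := h - 1.
have d0 : 0 < d by rewrite /d; lra.
set B0 := n%:R + 2 * (1 + 2 * A).
set T0 := maxn 2 (Num.truncn (B0 / d ^+ 2)).+1.
set Y := maxn n (2 ^ T0).
have T02 : (2 <= T0)%N by apply: leq_maxl.
have T0B : (Num.truncn (B0 / d ^+ 2) < T0)%N by apply: leq_maxr.
have Yn : (n <= Y)%N by apply: leq_maxl.
have YT0 : (2 ^ T0 <= Y)%N by apply: leq_maxr.
clearbody Y T0.
exists (2 ^ Y)%:R => x Hx.
have x1 : 1 <= x.
  apply: le_trans (ltW Hx); rewrite (_ : 1 = 1%:R) // ler_nat; exact: expn_gt0.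
have x0 : 0 <= x by apply: le_trans x1.
have [N0 [HS [HL1 HL2]]] := trunc_facts x1.
move: N0 HS HL1 HL2; set N := Num.truncn x; set S := trunc_log 2 N => N0 HS HL1 HL2.
have NY : (2 ^ Y <= N)%N by rewrite truncn_ge_nat // ltW.
have SY : (Y <= S)%N by apply: trunc_log_max.
set T := trunc_log 2 S.
have S0 : (0 < S)%N.
  have : (2 ^ T0 <= S)%N by exact: leq_trans YT0 SY.
  have := expn_gt0 2 T0; lia.
have TT0 : (T0 <= T)%N.
  apply: trunc_log_max => //; exact: leq_trans YT0 SY.
have T2S : (2 ^ T <= S)%N by apply: trunc_logP.
have ST1 : (S < 2 ^ T.+1)%N by apply: trunc_log_ltn.
have nS : (n <= S)%N by exact: leq_trans Yn SY.
have HK := @PT_low_bound n S N n0 HS nS; rewrite -/T in HK.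
set K := ((S - n) %/ T.+2)%N in HK.
have HK2 : (subn S n < K.+1 * T.+2)%N by apply: ltn_ceil.
have HKr : (S%:R : R) - n%:R < (K%:R + 1) * (T%:R + 2).
  have E1 : (((S - n)%N)%:R : R) = S%:R - n%:R by rewrite natrB.
  have E2 : (((K.+1 * T.+2)%N)%:R : R) = (K%:R + 1) * (T%:R + 2).
    by rewrite natrM -addn1 -addn2 !natrD.
  by rewrite -E1 -E2 ltr_nat.
set U := w ^+ T; set V := h ^+ T.
have U1 : 1 <= U by apply: exprn_ege1.
have Spow : V ^+ 2 * U <= S%:R.
  have : ((2 ^ T)%:R : R) <= S%:R by rewrite ler_nat.
  by rewrite natrX -hw exprMn -exprM mulnC exprM.
have Vb : 1 + T%:R * d <= V by rewrite /V (_ : h = 1 + d); [apply: bernoulli; lra | rewrite /d; lra].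
have Td : B0 < T%:R * d ^+ 2.
  have : B0 / d ^+ 2 < T%:R.
    apply: lt_le_trans (truncnS_gt _) _; rewrite ler_nat.
    exact: leq_trans TT0.
  by rewrite ltr_pdivrMr // exprn_gt0.
have T2 : 2 <= (T%:R : R).
  have : (2 <= T)%N by exact: leq_trans T02 TT0.
  by rewrite -(ler_nat R).
have Lx : ln x `^ c <= 2 * U.
  have l0 : 0 <= ln x by apply: ln_ge0.
  have E1 : ln x <= ((2 ^ T.+1)%N)%:R.
    apply: (le_trans HL2); apply: (@le_trans _ _ ((S.+1)%:R)).
      rewrite -[X in _ <= X]mulr1; apply: ler_wpM2l => //; exact: ln2_le1.
    by rewrite ler_nat.
  apply: (le_trans (ge0_ler_powR (ltW c0) _ _ E1)).
  - by rewrite nnegrE.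
  - by rewrite nnegrE.
  rewrite powR_natpow2 -/w exprS -/U; apply: ler_wpM2r; lra.
have PK : (K%:R : R) <= (PT n x)%:R by rewrite PT_PTn ler_nat.
move: HKr Spow Vb Td T2 Lx PK U1.
set Sr := (S%:R : R); set nr := (n%:R : R); set Tr := (T%:R : R); set Kr := (K%:R : R).
set Lc := ln x `^ c; set P := (PT n x)%:R.
have nr0 : 0 <= nr by [].
move=> HKr Spow Vb Td T2 Lx PK U1.
have s1 : 0 <= Tr * d by apply: mulr_ge0; lra.
have s2 : (Tr * d) ^+ 2 <= V ^+ 2.
  rewrite !expr2; apply: ler_pM => //; lra.
have s3 : Tr * B0 <= (Tr * d) ^+ 2.
  rewrite expr2 mulrACA -expr2 -mulrA; apply: ler_wpM2l; lra.
have s4 : nr + (Tr + 2) * (1 + 2 * A) <= Tr * B0.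
  rewrite /B0 -/nr.
  have : nr <= Tr * nr by rewrite -[X in X <= _]mul1r; apply: ler_wpM2r => //; lra.
  have : 0 <= (Tr - 2) * (1 + 2 * A) by apply: mulr_ge0; lra.
  nra.
have s5 : U * (nr + (Tr + 2) * (1 + 2 * A)) <= Sr.
  apply: le_trans Spow; rewrite mulrC; apply: ler_wpM2r; lra.
have s6 : nr + (Tr + 2) + 2 * A * U * (Tr + 2) <= U * (nr + (Tr + 2) * (1 + 2 * A)).
  have : 0 <= (U - 1) * (nr + (Tr + 2)) by apply: mulr_ge0; lra.
  nra.
have s7 : 2 * A * U * (Tr + 2) < Kr * (Tr + 2) by nra.
have s8 : 2 * A * U < Kr by move: s7; rewrite ltr_pM2r //; lra.
have s9 : A * Lc <= A * (2 * U) by apply: ler_wpM2l.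
lra.
Qed.



Local Open Scope classical_set_scope.

Theorem corollary6 (R : realType) (n : nat) (hn : (0 < n)%N) (c : R)
    (hc0 : 0 < c) (hc1 : c < 1) :
  ((fun x : R => (PT n x)%:R / ln x) @ +oo --> (0 : R)) /\
  ((fun x : R => (PT n x)%:R / (ln x `^ c)) @ +oo --> +oo) /\
  ((fun x : R => ln ((PT n x)%:R : R) / ln (ln x)) @ +oo --> (1 : R)).
Proof.
have e1 : (1 : R) < expR 1 by rewrite -[X in X < _]expR0 ltr_expR.
split; [|split].
- apply/cvgrPdist_lt => e e0.
  have e20 : 0 < e / 2 by lra.
  case: (part1 hn e20) => X HX.
  exists (Num.max X (expR 1)); split; first exact: num_real.
  move=> x; rewrite gt_max => /andP[hX hx].
  have x0 : 0 < x by apply: lt_trans hx; exact: expR_gt0.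
  have L1 : 1 < ln x by rewrite -ltr_expR lnK.
  have := HX x hX => H.
  rewrite sub0r normrN ger0_norm; last by apply: divr_ge0 => //; lra.
  rewrite ltr_pdivrMr; last lra.
  have : e / 2 * ln x < e * ln x by rewrite ltr_pM2r; lra.
  lra.
- apply/cvgryPgtr => M _.
  have A0 : 0 <= `|M| + 1 by have := normr_ge0 M; lra.
  case: (part2 hn hc0 hc1 A0) => X HX.
  exists (Num.max X (expR 1)); split; first exact: num_real.
  move=> x; rewrite gt_max => /andP[hX hx].
  have x0 : 0 < x by apply: lt_trans hx; exact: expR_gt0.
  have L1 : 1 < ln x by rewrite -ltr_expR lnK.
  have Lc : 0 < ln x `^ c by apply: powR_gt0; lra.
  have := HX x hX => H.
  rewrite ltr_pdivlMr //.
  have : M * ln x `^ c < (`|M| + 1) * ln x `^ c.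
    rewrite ltr_pM2r //; have := ler_norm M; lra.
  lra.
- apply/cvgrPdist_lt => e e0.
  set m := Num.min e 1.
  have m0 : 0 < m by rewrite lt_min e0 ltr01.
  have me : m <= e by rewrite ge_min lexx.
  have m1 : m <= 1 by rewrite ge_min lexx orbT.
  set c' := 1 - m / 2.
  have c'0 : 0 < c' by rewrite /c'; lra.
  have c'1 : c' < 1 by rewrite /c'; lra.
  have A0 : (0 : R) <= 1 by lra.
  case: (part2 hn c'0 c'1 A0) => X2 HX2.
  case: (part1 hn (@ltr01 R)) => X1 HX1.
  exists (Num.max (Num.max X1 X2) (expR (expR 1))); split; first exact: num_real.
  move=> x; rewrite !gt_max => /andP[/andP[hX1 hX2] hx].
  have ee0 : 0 < expR (expR 1 : R) by exact: expR_gt0.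
  have x0 : 0 < x by apply: lt_trans hx.
  have L1 : expR 1 < ln x by rewrite -ltr_expR lnK.
  have L0 : 0 < ln x by apply: lt_trans L1; exact: expR_gt0.
  have LL : 0 < ln (ln x) by apply: ln_gt0; lra.
  have Lc : 0 < ln x `^ c' by apply: powR_gt0.
  have := HX2 x hX2; rewrite mul1r => H2.
  have := HX1 x hX1; rewrite mul1r => H1.
  have P0 : 0 < ((PT n x)%:R : R) by apply: lt_le_trans H2.
  have U : ln ((PT n x)%:R : R) <= ln (ln x) by rewrite ler_ln.
  have D : c' * ln (ln x) <= ln ((PT n x)%:R : R).
    by rewrite -ln_powR ler_ln // posrE.
  have r1 : ln ((PT n x)%:R : R) / ln (ln x) <= 1 by rewrite ler_pdivrMr // mul1r.
  have r2 : c' <= ln ((PT n x)%:R : R) / ln (ln x) by rewrite ler_pdivlMr.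
  rewrite ger0_norm; last lra.
  rewrite /c' in r2; lra.
Qed.
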